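(* Let $\Gamma$ be a gain operator on $\ell^\infty_+(\mathcal I)$ and suppose that for some $\rho\in\mathcal K_\infty$: (i) the set $\Psi(\Gamma_\rho)$ is cofinal; (ii) $\Gamma_\rho$ satisfies the uniform NJI condition; (iii) there is $M>0$ with $|\mathcal I_i|\le M$ for all $i\in\mathcal I$. Then there exists $\rho'\in\mathcal K_\infty$ such that $\Sigma(\Gamma_{\rho'})$ is GATT.
   Context: Let $\mathcal I$ be a nonempty countable index set; $\ell^\infty_+(\mathcal I)$ is the cone of nonnegative real families $s=(s_i)_{i\in\mathcal I}$ with $\|s\|:=\sup_i|s_i|<\infty$, ordered componentwise. $\mathcal K_\infty$: continuous strictly increasing unbounded $\gamma:\mathbb R_+\to\mathbb R_+$ with $\gamma(0)=0$; such functions act on $\ell^\infty_+(\mathcal I)$ componentwise. For $\mathcal J\subset\mathcal I$, $s_{|\mathcal J}$ agrees with $s$ on $\mathcal J$ and is $0$ elsewhere. Gain operator: for each $i$ a finite (possibly empty) $\mathcal I_i\subset\mathcal I\setminus\{i\}$; directed graph $\mathcal G$ with vertices $\mathcal I$ and edges $ji$, $j\in\mathcal I_i$; a pointwise equicontinuous family $\gamma_{ij}\in\mathcal K_\infty$ ($ji\in E(\mathcal G)$); functions $\mu_i:\ell^\infty_+(\mathcal I)\to[0,\infty]$ with (M1) some $\xi\in\mathcal K_\infty$ has $\mu_i(0)=0$, $\mu_i(s)\ge\xi(\|s\|)$; (M2) $\mu_i$ monotone; (M3) for each finite $\mathcal J$, $\mu_i$ restricted to vectors vanishing off $\mathcal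 J$ is finite-valued and continuous; (M4) for each norm-bounded $A$ and $\varepsilon>0$ there is $\delta>0$ with $\sup_i|\mu_i(s_{|\mathcal I_i})-\mu_i(s^0_{|\mathcal I_i})|\le\varepsilon$ whenever $s^0\in A$, $\|s-s^0\|\le\delta$. $\Gamma_i(s):=\mu_i([\gamma_{ij}(s_j)]_{j\in\mathcal I_i})$ (argument zero outside $\mathcal I_i$). For $\rho\in\mathcal K_\infty$, $\Gamma_\rho:=(\mathrm{id}+\rho)\circ\Gamma$. $\mathcal N^-_i(n)$: vertices $j$ with a directed path from $j$ to $i$ of length at most $n$ ($\mathcal N^-_i(0)=\{i\}$). For a monotone $T$, $\Psi(T):=\{s:T(s)\le s\}$; $\Sigma(T)$ is the system $s^{n+1}=T(s^n)$, GATT if $\|T^n(s)\|\to0$ for all $s$. A set $A$ is cofinal if every $s\in\ell^\infty_+(\mathcal I)$ has some $\hat s\in A$ with $s\le\hat s$. $T$ satisfies the uniform NJI condition if for all $r,\varepsilon>0$ there are $n\in\mathbb N$, $\delta>0$ such that for all $s\in\ell^\infty_+(\mathcal I)$, $i$ with $s_i\ge\varepsilon$, $\|s\|\le r$ there is $j\in\mathcal N^-_i(n)$ with $s_j\ge\delta$ and $T_j(s)<s_j$. *)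

(* Defs.v *)
From Stdlib Require Import Reals Lra List ClassicalEpsilon.
From Coquelicot Require Import Coquelicot.
Open Scope R_scope.
Set Implicit Arguments.

Section Defs.
Variable I : Type.

Definition linf_pos (s : I -> R) : Prop :=
  (forall i, 0 <= s i) /\ exists C, forall i, Rabs (s i) <= C.

(* sup norm ||s|| = sup_i |s_i| (only applied to bounded families) *)
Definition nrm (s : I -> R) : R :=
  real (Lub_Rbar (fun x => exists i, x = Rabs (s i))).

Definition vle (s t : I -> R) : Prop := forall i, s i <= t i.
Definition vsub (s t : I -> R) : I -> R := fun i => s i - t i.
Definition vzero : I -> R := fun _ => 0.

Definition restr (J : list I) (s : I -> R) : I -> R :=
  fun j => if excluded_middle_informative (In j J) then s j else 0.

End Defs.

(* class K_oo, for functions R_+ -> R_+ (represented on R, values off R_+ irrelevant) *)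
Definition Kinf (g : R -> R) : Prop :=
  g 0 = 0 /\
  (forall x y, 0 <= x -> x < y -> g x < g y) /\
  (forall x, 0 <= x -> forall eps, 0 < eps -> exists d, 0 < d /\
     forall y, 0 <= y -> Rabs (y - x) < d -> Rabs (g y - g x) < eps) /\
  (forall M, exists x, 0 <= x /\ M <= g x).

Section Gain.
Variable I : Type.
(* Ii i : the finite set I_i (as a duplicate-free list);
   gam i j : gamma_{ij}, meaningful for j in I_i (edge ji);
   mu i : mu_i : l^oo_+(I) -> [0,oo] *)
Variable Ii : I -> list I.
Variable gam : I -> I -> R -> R.
Variable mu : I -> (I -> R) -> Rbar.

Definition is_gain_operator : Prop :=
  (forall i, NoDup (Ii i) /\ ~ In i (Ii i)) /\
  (forall i j, In j (Ii i) -> Kinf (gam i j)) /\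
  (forall r, 0 <= r -> forall eps, 0 < eps -> exists d, 0 < d /\
     forall i j, In j (Ii i) -> forall r', 0 <= r' -> Rabs (r' - r) < d ->
       Rabs (gam i j r' - gam i j r) < eps) /\
  (exists xi, Kinf xi /\ forall i, mu i (@vzero I) = Finite 0 /\
     forall s, linf_pos s -> Rbar_le (Finite (xi (nrm s))) (mu i s)) /\
  (forall i s t, linf_pos s -> linf_pos t -> vle s t -> Rbar_le (mu i s) (mu i t)) /\
  (forall (J : list I) i,
     let VJ := fun s => linf_pos s /\ forall j, ~ In j J -> s j = 0 in
     (forall s, VJ s -> is_finite (mu i s)) /\
     (forall s, VJ s -> forall eps, 0 < eps -> exists d, 0 < d /\
        forall t, VJ t -> nrm (vsub t s) < d ->
          Rabs (real (mu i t) - real (mu i s)) < eps)) /\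
  (forall (A : (I -> R) -> Prop),
     (forall s, A s -> linf_pos s) -> (exists r, forall s, A s -> nrm s <= r) ->
     forall eps, 0 < eps -> exists d, 0 < d /\
       forall i s0 s, A s0 -> linf_pos s -> nrm (vsub s s0) <= d ->
         Rabs (real (mu i (restr (Ii i) s)) - real (mu i (restr (Ii i) s0))) <= eps).

(* Gamma_i(s) = mu_i([gamma_ij(s_j)]_{j in I_i}); finite by (M3) *)
Definition Gamma (s : I -> R) : I -> R :=
  fun i => real (mu i (restr (Ii i) (fun j => gam i j (s j)))).

Definition Gamma_rho (rho : R -> R) (s : I -> R) : I -> R :=
  fun i => Gamma s i + rho (Gamma s i).

Fixpoint Nminus (i : I) (n : nat) (j : I) : Prop :=
  match n with
  | O => j = i
  | S m => Nminus i m j \/ exists k, Nminus i m k /\ In j (Ii k)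
  end.

Definition uniform_NJI (T : (I -> R) -> I -> R) : Prop :=
  forall r eps, 0 < r -> 0 < eps -> exists (n : nat) (d : R), 0 < d /\
    forall s i, linf_pos s -> eps <= s i -> nrm s <= r ->
      exists j, Nminus i n j /\ d <= s j /\ T s j < s j.

End Gain.

Definition Psi (I : Type) (T : (I -> R) -> I -> R) (s : I -> R) : Prop :=
  linf_pos s /\ vle (T s) s.

Definition cofinal (I : Type) (A : (I -> R) -> Prop) : Prop :=
  forall s, linf_pos s -> exists sh, A sh /\ vle s sh.

Definition GATT (I : Type) (T : (I -> R) -> I -> R) : Prop :=
  forall s, linf_pos s -> forall eps, 0 < eps -> exists N : nat,
    forall n, (N <= n)%nat -> forall i, Rabs (Nat.iter n T s i) <= eps.

(* Main.v *)
Require Import Defs.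
From Stdlib Require Import Reals List Lra Lia ZArith ClassicalEpsilon.
From Coquelicot Require Import Coquelicot.
Open Scope R_scope.

Lemma list_bound {I : Type} (l : list I) (f : I -> R) :
  exists C, 0 <= C /\ forall j, In j l -> Rabs (f j) <= C.
Proof.
  induction l as [|a l IH].
  - exists 0; split; [lra|]; intros j [].
  - destruct IH as [C [HC H]]. exists (Rmax C (Rabs (f a))). split.
    + apply Rle_trans with C; [lra| apply Rmax_l].
    + intros j [<-|Hj]; [apply Rmax_r|]. apply Rle_trans with C; [auto|apply Rmax_l].
Qed.

Lemma restr_linf {I : Type} (l : list I) (f : I -> R) :
  (forall j, In j l -> 0 <= f j) -> linf_pos (restr l f).
Proof.
  intros H. destruct (list_bound l f) as [C [HC HB]]. split.
  - intros i; unfold restr; destruct excluded_middle_informative; auto; lra.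
  - exists C; intros i; unfold restr; destruct excluded_middle_informative; auto.
    rewrite Rabs_R0; lra.
Qed.

Lemma Kinf_le {g} : Kinf g -> forall x y, 0 <= x -> x <= y -> g x <= g y.
Proof.
  intros [_ [Hm _]] x y Hx Hxy. destruct (Req_dec x y) as [->|Hne]; [lra|].
  left; apply Hm; lra.
Qed.

Lemma Kinf_nonneg {g} : Kinf g -> forall x, 0 <= x -> 0 <= g x.
Proof.
  intros Hg x Hx. pose proof (Kinf_le Hg 0 x (Rle_refl 0) Hx) as H.
  destruct Hg as [H0 _]. lra.
Qed.

Lemma Gamma_mono {I : Type} {Ii : I -> list I} {gam mu} :
  is_gain_operator Ii gam mu -> forall s t, (forall j, 0 <= s j) -> (forall j, s j <= t j) ->
  forall i, 0 <= Gamma Ii gam mu s i /\ Gamma Ii gam mu s i <= Gamma Ii gam mu t i.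
Proof.
  intros (H1 & H2 & _ & HM1 & HM2 & HM3 & _) s t Hs Hst i.
  unfold Gamma.
  set (a := restr (Ii i) (fun j => gam i j (s j))).
  set (b := restr (Ii i) (fun j => gam i j (t j))).
  assert (la : linf_pos a).
  { apply restr_linf; intros j Hj. apply (Kinf_nonneg (H2 i j Hj)); auto. }
  assert (lb : linf_pos b).
  { apply restr_linf; intros j Hj. apply (Kinf_nonneg (H2 i j Hj)).
    specialize (Hs j); specialize (Hst j); lra. }
  assert (lz : linf_pos (@vzero I)).
  { split; [intros; unfold vzero; lra| exists 0; intros; unfold vzero; rewrite Rabs_R0; lra]. }
  assert (ab : vle a b).
  { intros j; unfold a, b, restr; destruct excluded_middle_informative; [|lra].
    apply (Kinf_le (H2 i j i0)); auto. }
  assert (za : vle (@vzero I) a).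
  { intros j; unfold a, vzero, restr; destruct excluded_middle_informative; [|lra].
    apply (Kinf_nonneg (H2 i j i0)); auto. }
  destruct (HM3 (Ii i) i) as [Hfin _].
  assert (fa : is_finite (mu i a)).
  { apply Hfin; split; auto. intros j Hj; unfold a, restr.
    destruct excluded_middle_informative; tauto. }
  assert (fb : is_finite (mu i b)).
  { apply Hfin; split; auto. intros j Hj; unfold b, restr.
    destruct excluded_middle_informative; tauto. }
  destruct HM1 as [xi [_ Hxi]]. destruct (Hxi i) as [Hz _].
  pose proof (HM2 i _ _ lz la za) as Hza.
  pose proof (HM2 i _ _ la lb ab) as Hab.
  rewrite Hz in Hza. rewrite <- fa in Hza, Hab. rewrite <- fb in Hab.
  simpl in Hza, Hab. split; auto.
Qed.

Lemma key {rho : R -> R} (Hr : Kinf rho) g x d : 0 < d -> 0 <= g -> g + rho g < x -> d <= x ->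
  g + rho g / 2 <= x - Rmin (rho (d/2) / 2) (d/4).
Proof.
  intros Hd Hg H1 H2.
  pose proof (Rmin_l (rho (d/2) / 2) (d/4)). pose proof (Rmin_r (rho (d/2) / 2) (d/4)).
  pose proof (Kinf_nonneg Hr g Hg).
  destruct (Rle_lt_dec (d/2) g) as [Hc|Hc].
  - pose proof (Kinf_le Hr (d/2) g ltac:(lra) Hc). lra.
  - lra.
Qed.

Fixpoint nbl {I : Type} (Ii : I -> list I) (i : I) (k : nat) : list I :=
  match k with
  | O => i :: nil
  | S k => nbl Ii i k ++ flat_map Ii (nbl Ii i k)
  end.

Lemma nbl_in {I : Type} (Ii : I -> list I) i k j : Defs.Nminus Ii i k j -> In j (nbl Ii i k).
Proof.
  revert j; induction k as [|k IH]; simpl; intros j.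
  - intros ->; left; auto.
  - intros [H|[k0 [H1 H2]]]; apply in_or_app; [left; auto| right].
    apply in_flat_map; eauto.
Qed.

Lemma flat_map_len {I : Type} (Ii : I -> list I) Mn :
  (forall i, (length (Ii i) <= Mn)%nat) -> forall l, (length (flat_map Ii l) <= Mn * length l)%nat.
Proof.
  intros H l; induction l as [|a l IH]; simpl; [lia|]. rewrite length_app.
  specialize (H a). lia.
Qed.

Lemma nbl_len {I : Type} (Ii : I -> list I) Mn :
  (forall i, (length (Ii i) <= Mn)%nat) -> forall i k, (length (nbl Ii i k) <= (S Mn)^k)%nat.
Proof.
  intros H i k; induction k as [|k IH]; simpl; [lia|]. rewrite length_app.
  pose proof (flat_map_len Ii Mn H (nbl Ii i k)). nia.
Qed.

Definition lsum {I : Type} (l : list I) (f : I -> R) : R := fold_right (fun j a => f j + a) 0 l.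

Lemma lsum_le {I : Type} (l : list I) f g : (forall j, f j <= g j) -> lsum l f <= lsum l g.
Proof. intros H; induction l; simpl; [lra|]. specialize (H a); lra. Qed.

Lemma lsum_dec {I : Type} (l : list I) f g j0 c : (forall j, f j <= g j) -> In j0 l ->
  f j0 <= g j0 - c -> lsum l f <= lsum l g - c.
Proof.
  intros H Hin Hj. induction l as [|a l IH]; simpl; [destruct Hin|].
  destruct Hin as [<-|Hin].
  - pose proof (lsum_le l f g H); lra.
  - specialize (IH Hin). specialize (H a); lra.
Qed.

Lemma lsum_nonneg {I : Type} (l : list I) f : (forall j, 0 <= f j) -> 0 <= lsum l f.
Proof. intros H; induction l; simpl; [lra|]. specialize (H a); lra. Qed.

Lemma lsum_bound {I : Type} (l : list I) f C : (forall j, f j <= C) -> lsum l f <= INR (length l) * C.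
Proof.
  intros H; induction l as [|a l IH]; simpl length; simpl lsum; [simpl; lra|].
  rewrite S_INR. specialize (H a); lra.
Qed.

Lemma nrm_le {I : Type} (s : I -> R) C : inhabited I -> (forall i, Rabs (s i) <= C) -> nrm s <= C.
Proof.
  intros [i0] H. unfold nrm.
  set (E := fun x => exists i, x = Rabs (s i)).
  destruct (Lub_Rbar_correct E) as [Hub Hlub].
  assert (H1 : Rbar_le (Lub_Rbar E) C).
  { apply Hlub; intros x [i ->]; simpl; auto. }
  assert (H2 : Rbar_le (Rabs (s i0)) (Lub_Rbar E)).
  { apply Hub; exists i0; auto. }
  destruct (Lub_Rbar E); simpl in *; auto; contradiction.
Qed.

Theorem proposition2p20
  (I : Type) (Icount : exists f : I -> nat, forall x y, f x = f y -> x = y)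
  (Inonempty : inhabited I)
  (Ii : I -> list I) (gam : I -> I -> R -> R) (mu : I -> (I -> R) -> Rbar)
  (Hgain : is_gain_operator Ii gam mu)
  (rho : R -> R) (Hrho : Kinf rho)
  (Hcof : cofinal (Psi (Gamma_rho Ii gam mu rho)))
  (HNJI : uniform_NJI Ii (Gamma_rho Ii gam mu rho))
  (Hdeg : exists M, 0 < M /\ forall i, INR (length (Ii i)) <= M) :
  exists rho', Kinf rho' /\ GATT (Gamma_rho Ii gam mu rho').
Proof.
  set (rho' := fun x => rho x / 2).
  exists rho'. split.
  { destruct Hrho as (H0 & Hm & Hc & Hu). unfold rho'. split; [rewrite H0; lra|].
    split; [intros x y Hx Hxy; specialize (Hm x y Hx Hxy); lra|]. split.
    - intros x Hx eps Heps. destruct (Hc x Hx (2*eps) ltac:(lra)) as [d [Hd Hd']].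
      exists d; split; auto. intros y Hy Hyx. specialize (Hd' y Hy Hyx).
      replace (rho y / 2 - rho x / 2) with ((rho y - rho x) / 2) by field.
      rewrite Rabs_div by lra. rewrite (Rabs_right 2) by lra. lra.
    - intros M. destruct (Hu (2*M)) as [x [Hx HM]]. exists x; split; auto; lra. }
  set (T := Gamma_rho Ii gam mu rho).
  set (T' := Gamma_rho Ii gam mu rho').
  assert (T'mono : forall y z, (forall j, 0 <= y j) -> (forall j, y j <= z j) ->
            forall j, 0 <= T' y j /\ T' y j <= T' z j).
  { intros y z Hy Hyz j. destruct (Gamma_mono Hgain y z Hy Hyz j) as [Hg1 Hg2].
    unfold T', Gamma_rho, rho'.
    pose proof (Kinf_nonneg Hrho _ Hg1). pose proof (Kinf_le Hrho _ _ Hg1 Hg2). lra. }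
  assert (T'T : forall y, (forall j, 0 <= y j) -> forall j, T' y j <= T y j).
  { intros y Hy j. destruct (Gamma_mono Hgain y y Hy (fun j => Rle_refl _) j) as [Hg1 _].
    unfold T, T', Gamma_rho, rho'. pose proof (Kinf_nonneg Hrho _ Hg1). lra. }
  destruct Hdeg as [M [HM Hlen]].
  set (Mn := Z.to_nat (up M)).
  assert (HMn : forall i, (length (Ii i) <= Mn)%nat).
  { intros i. specialize (Hlen i). destruct (archimed M) as [Ha _].
    rewrite INR_IZR_INZ in Hlen. assert (Z.of_nat (length (Ii i)) < up M)%Z.
    { apply lt_IZR; lra. }
    unfold Mn; lia. }
  intros s Hs eps Heps.
  destruct (Hcof s Hs) as [sh [[Hsh HTsh] Hssh]].
  destruct Hsh as [Hsh0 [C HC]].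
  assert (HC0 : 0 <= C).
  { destruct Inonempty as [i0]. specialize (HC i0). pose proof (Rabs_pos (sh i0)); lra. }
  set (r := Rmax C 1).
  assert (Hr1 : 0 < r) by (unfold r; pose proof (Rmax_r C 1); lra).
  assert (HCr : C <= r) by apply Rmax_l.
  destruct (HNJI r eps Hr1 Heps) as [n0 [d [Hd HN]]].
  set (c := Rmin (rho (d/2) / 2) (d/4)).
  assert (Hc : 0 < c).
  { unfold c. apply Rmin_glb_lt; [|lra].
    destruct Hrho as (H0 & Hm & _). pose proof (Hm 0 (d/2) (Rle_refl 0) ltac:(lra)). lra. }
  set (x := fun m => Nat.iter m T' sh).
  assert (Hx : forall m j, 0 <= x m j <= sh j).
  { intros m; induction m as [|m IH]; intros j.
    - simpl. split; [apply Hsh0|lra].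
    - change (x (S m) j) with (T' (x m) j).
      assert (Hx0 : forall j, 0 <= x m j) by (intros; apply IH).
      destruct (T'mono (x m) sh Hx0 (fun j => proj2 (IH j)) j) as [A B].
      pose proof (T'T sh Hsh0 j). pose proof (HTsh j : T sh j <= sh j). lra. }
  assert (Hdec1 : forall m j, x (S m) j <= x m j).
  { intros m; induction m as [|m IH]; intros j.
    - change (x 1%nat j) with (T' sh j). pose proof (T'T sh Hsh0 j). pose proof (HTsh j : T sh j <= sh j).
      change (x O j) with (sh j). lra.
    - change (x (S (S m)) j) with (T' (x (S m)) j).
      change (x (S m) j) with (T' (x m) j).
      apply (T'mono (x (S m)) (x m)); [intros; apply Hx| apply IH]. }
  assert (Hdec : forall m k, (m <= k)%nat -> forall j, x k j <= x m j).
  { intros m k Hmk; induction Hmk as [|k Hmk IH]; intros j; [lra|].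
    specialize (IH j); specialize (Hdec1 k j); lra. }
  assert (Hlinf : forall m, linf_pos (x m)).
  { intros m; split; [intros; apply Hx|]. exists C. intros j.
    destruct (Hx m j). rewrite Rabs_right by lra. specialize (HC j).
    rewrite Rabs_right in HC by lra. lra. }
  assert (Hnrm : forall m, nrm (x m) <= r).
  { intros m. apply Rle_trans with C; auto. apply nrm_le; auto.
    intros j; destruct (Hx m j). rewrite Rabs_right by lra. specialize (HC j).
    rewrite Rabs_right in HC by lra. lra. }
  set (K := ((S Mn) ^ n0)%nat).
  set (B := INR K * r / c).
  assert (HB : 0 <= B).
  { unfold B. apply Rmult_le_pos; [apply Rmult_le_pos; [apply pos_INR|lra]|].
    left; apply Rinv_0_lt_compat; auto. }
  set (N := Z.to_nat (up B)).
  assert (HN' : B < INR N).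
  { destruct (archimed B) as [Ha _]. unfold N.
    assert (0 <= up B)%Z by (apply le_IZR; lra).
    rewrite INR_IZR_INZ, Z2Nat.id by auto. lra. }
  assert (Hsmall : forall n, (N <= n)%nat -> forall i, x n i < eps).
  { intros n Hn i. destruct (Rlt_le_dec (x n i) eps) as [H|H]; auto. exfalso.
    set (L := nbl Ii i n0).
    set (Phi := fun m => lsum L (x m)).
    assert (HPhi : forall m, (m <= n)%nat -> Phi m <= Phi O - INR m * c).
    { intros m; induction m as [|m IH]; intros Hm.
      - simpl; lra.
      - specialize (IH ltac:(lia)).
        assert (Hmi : eps <= x m i) by (pose proof (Hdec m n ltac:(lia) i); lra).
        destruct (HN (x m) i (Hlinf m) Hmi (Hnrm m)) as [j [Hj [Hdj Hlt]]].
        assert (Hstep : x (S m) j <= x m j - c).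
        { change (x (S m) j) with (T' (x m) j). unfold T', Gamma_rho, rho'.
          unfold Gamma_rho in Hlt.
          destruct (Gamma_mono Hgain (x m) (x m) (fun j => proj1 (Hx m j))
                     (fun j => Rle_refl _) j) as [Hg _].
          apply (key Hrho); auto. }
        assert (Hph : Phi (S m) <= Phi m - c).
        { unfold Phi. apply lsum_dec with j; auto. apply nbl_in; auto. }
        rewrite S_INR. lra. }
    specialize (HPhi n (le_n n)).
    assert (H0 : 0 <= Phi n) by (apply lsum_nonneg; intros; apply Hx).
    assert (H1 : Phi O <= INR (length L) * C).
    { apply lsum_bound. intros j. destruct (Hx O j). specialize (HC j).
      rewrite Rabs_right in HC by lra. lra. }
    assert (H2 : INR (length L) <= INR K) by (apply le_INR; apply nbl_len; auto).
    assert (H3 : INR (length L) * C <= INR K * r).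
    { apply Rmult_le_compat; auto; apply pos_INR. }
    assert (H4 : INR N <= INR n) by (apply le_INR; auto).
    assert (H5 : B * c = INR K * r) by (unfold B; field; lra).
    assert (H6 : INR K * r < INR n * c).
    { rewrite <- H5. apply Rmult_lt_compat_r; auto. lra. }
    lra. }
  exists N. intros n Hn i.
  assert (Hs' : forall m j, 0 <= Nat.iter m T' s j <= x m j).
  { intros m; induction m as [|m IH]; intros j.
    - simpl. split; [apply Hs| apply Hssh].
    - change (Nat.iter (S m) T' s j) with (T' (Nat.iter m T' s) j).
      change (x (S m) j) with (T' (x m) j).
      apply T'mono; intros; apply IH. }
  destruct (Hs' n i). specialize (Hsmall n Hn i).
  rewrite Rabs_right by lra. lra.
Qed.
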